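(* If a nonempty set of candidates start the leader election algorithm, then the algorithm eventually terminates and exactly one candidate is known as the leader.
   Context: A broadcast network is modeled as a connected graph G(V,E) with n nodes; two nodes are joined by a (bidirectional) edge iff they hear each other's transmissions, and a transmitted message is heard by all neighbors of the sender. Messages arrive reliably, without errors, in FIFO order after arbitrary finite delay; there are no failures or topology changes; each node knows its number of neighbors. In the leader election algorithm the nodes are partitioned into fragments, each consisting of an active candidate node and its supporting nodes. Each fragment F has an identity id(F) = (id(F).size, id(F).identity) (its size and the candidate's identification number), ordered lexicographically: id(F1) > id(F2) iff id(F1).size > id(F2).size, or the sizes are equal and id(F1).identity > id(F2).identity. An edge is internal if it joins nodes of the same fragment and external otherwise; an external edge between F1 and F2 with id(F1) > id(F2) is directed from F1 to F2 (outgoing for F1, incoming for F2). Initially every node is a fragment of size 1 in state wait. The fragment-level (general) algorithm is: (1) a fragment enters (or stays in) state wait when it has at least one outgoing edge; (2) a fragment in wait moves to state work when all its external edges are incoming; in work it incurs a finite positive delay (workdelay) during which it counts its current number of nodes new_size and compares it to the size of its maximal neighbor fragment F': if new_size > X · id(F').size (X > 1 a parameter), it sets its size to new_size, all its external edges become outgoing, and it returns to wait; otherwise it ceases to exist and joins F' (its edges to F' become internal; F' keeps its size and identity); (3) a fragment with no external edges is in state leader. State transitions themselves take no time. *)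

(* Defs.v *)
From mathcomp Require Import all_boot all_order all_algebra.
Set Implicit Arguments. Unset Strict Implicit. Unset Printing Implicit Defensive.
Import Order.TTheory GRing.Theory Num.Theory.
Local Open Scope ring_scope.

Inductive fstate := FWait | FWork | FLeader.

(* A global configuration:
   - cand v   : the candidate node of the fragment containing v
                (v is a candidate iff cand v = v);
   - fsize c  : id(F).size of the fragment whose candidate is c
                (the recorded size, not necessarily the current node count);
   - fst c    : state of the fragment whose candidate is c.
   id(F).identity is the identification number idn c of its candidate c. *)
Record config (V : Type) := Config {
  cand : V -> V;
  fsize : V -> nat;
  fst : V -> fstate
}.

Section Algorithm.
Variables (V : finType) (adj : rel V) (idn : V -> nat).
Variables (R : realFieldType) (X : R).

Definition upd (T : Type) (f : V -> T) (c : V) (t : T) : V -> T :=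
  fun x => if x == c then t else f x.

Definition id_gt (C : config V) (a b : V) : bool :=
  (fsize C b < fsize C a)%N || ((fsize C a == fsize C b) && (idn b < idn a)%N).

Definition ext_of (C : config V) (c u v : V) : bool :=
  [&& cand C u == c, adj u v & cand C v != c].

Definition has_ext (C : config V) (c : V) : Prop := exists u v, ext_of C c u v.

Definition all_incoming (C : config V) (c : V) : Prop :=
  forall u v, ext_of C c u v -> id_gt C (cand C v) c.

Definition neighbor_frag (C : config V) (c d : V) : Prop :=
  exists u v, ext_of C c u v /\ cand C v = d.

Definition max_neighbor (C : config V) (c d : V) : Prop :=
  neighbor_frag C c d /\ forall e, neighbor_frag C c e -> e = d \/ id_gt C d e.

Definition frag_size (C : config V) (c : V) : nat := #|[pred v | cand C v == c]|.

(* The work phase,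
   which lasts a positive finite delay, is split into its start event and
   its end event (where new_size is counted and compared); arbitrary other
   events may be interleaved in between (asynchrony). *)
Inductive step (C : config V) : config V -> Prop :=
| StartWork c :
    cand C c = c -> fst C c = FWait -> has_ext C c -> all_incoming C c ->
    step C (Config (cand C) (fsize C) (upd (fst C) c FWork))
| BecomeLeader c :
    cand C c = c -> fst C c = FWait -> ~ has_ext C c ->
    step C (Config (cand C) (fsize C) (upd (fst C) c FLeader))
| FinishGrow c d :
    cand C c = c -> fst C c = FWork -> max_neighbor C c d ->
    X * (fsize C d)%:R < (frag_size C c)%:R ->
    step C (Config (cand C) (upd (fsize C) c (frag_size C c)) (upd (fst C) c FWait))
| FinishJoin c d :
    cand C c = c -> fst C c = FWork -> max_neighbor C c d ->
    ~ (X * (fsize C d)%:R < (frag_size C c)%:R) ->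
    step C (Config (fun v => if cand C v == c then d else cand C v)
                   (fsize C) (fst C)).

Definition init : config V := Config (fun v => v) (fun _ => 1%N) (fun _ => FWait).

Inductive reachable : config V -> Prop :=
| reach0 : reachable init
| reachS C C' : reachable C -> step C C' -> reachable C'.

Definition terminal (C : config V) : Prop := forall C', ~ step C C'.

End Algorithm.

(* Main.v *)
Require Import Defs.
From mathcomp Require Import all_boot all_order all_algebra.
From mathcomp Require Import zify ring lra.
From Stdlib Require Import Classical.
Set Implicit Arguments. Unset Strict Implicit. Unset Printing Implicit Defensive.
Import Order.TTheory GRing.Theory Num.Theory.
Local Open Scope ring_scope.

Section Proof.
Variables (V : finType) (adj : rel V) (idn : V -> nat) (R : realFieldType) (X : R).
Hypothesis adj_sym : symmetric adj.
Hypothesis adj_conn : forall x y : V, connect adj x y.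
Hypothesis idn_inj : injective idn.
Hypothesis X_gt1 : 1 < X.
Hypothesis V_ne : (0 < #|V|)%N.

Definition Inv (C : config V) : Prop :=
  [/\ (forall v, cand C (cand C v) = cand C v),
      (forall v, (fsize C v <= #|V|)%N),
      (forall c, cand C c = c -> fst C c = FWork ->
          all_incoming adj idn C c /\ has_ext adj C c)
    & (forall l, cand C l = l -> fst C l = FLeader -> forall v, cand C v = l)].

Lemma id_gt_asym (C : config V) a b : id_gt idn C a b -> id_gt idn C b a -> False.
Proof.
rewrite /id_gt => /orP[h|/andP[/eqP e h]] /orP[h'|/andP[/eqP e' h']]; lia.
Qed.

Lemma no_adj_work C c e u v : Inv C -> cand C c = c -> fst C c = FWork ->
  cand C e = e -> fst C e = FWork -> ext_of adj C c u v -> cand C v = e -> False.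
Proof.
case=> _ _ Hw _ hc wc he we hext hv.
have [Ic _] := Hw c hc wc. have [Ie _] := Hw e he we.
have g1 := Ic u v hext. rewrite hv in g1.
move: hext; rewrite /ext_of => /and3P[/eqP hu a hvc].
have hext2 : ext_of adj C e v u.
  by rewrite /ext_of hv eqxx adj_sym a hu /= eq_sym -hv.
have g2 := Ie v u hext2. rewrite hu in g2. exact: id_gt_asym g1 g2.
Qed.

Lemma noext_all C c : cand C c = c -> ~ has_ext adj C c -> forall v, cand C v = c.
Proof.
move=> hc hn v. have /connectP[p hp ->] := adj_conn c v.
suff H : forall p x, cand C x = c -> path adj x p -> cand C (last x p) = c by exact: H.
elim=> [|y q IH] x hx /=; first by [].
case/andP=> a hq. apply: IH hq. case: (eqVneq (cand C y) c) => // ne.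
exfalso; apply: hn; exists x, y. by rewrite /ext_of hx eqxx a ne.
Qed.

Lemma Inv_init : Inv (init V).
Proof.
split => //=.
Qed.


Lemma Inv_step C C' : Inv C -> step adj idn X C C' -> Inv C'.
Proof.
move=> I st. have I0 := I. case: I0 => Ia Ib Hw Hd.
case: st.
- move=> c hc hw hx hi; split => //=.
  + move=> e he; rewrite /upd; case: eqP => [->|ne] we; first by split.
    exact: Hw e he we.
  + move=> l hl; rewrite /upd; case: eqP => [-> //|ne] wl.
    exact: Hd l hl wl.
- move=> c hc hw hn; split => //=.
  + move=> e he; rewrite /upd; case: eqP => [-> //|ne] we.
    exact: Hw e he we.
  + move=> l hl; rewrite /upd; case: eqP => [->|ne] wl; first exact: noext_all.
    exact: Hd l hl wl.
- move=> c d hc hw hm hlt; split => //=.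
  + move=> v; rewrite /upd; case: eqP => _ //; exact: max_card.
  + move=> e he; rewrite /upd; case: eqP => [-> //|ne] we.
    have [Ie He] := Hw e he we; split => //.
    move=> u v hext. have g := Ie u v hext.
    rewrite /id_gt /= /upd. case: (eqVneq (cand C v) c) => hvc.
      by exfalso; exact: (no_adj_work I he we hc hw hext hvc).
    by rewrite (introF eqP ne).
  + move=> l hl; rewrite /upd; case: eqP => [-> //|ne] wl.
    exact: Hd l hl wl.
- move=> c d hc hw hm hnlt.
  case: (hm) => [[u0 [v0 [he0 hv0]]] hmax].
  move: (he0); rewrite /ext_of => /and3P[hu0 a0 hv0c].
  have hd : cand C d = d by rewrite -hv0 Ia.
  have dnc : d != c by rewrite -hv0.
  have wd : fst C d <> FWork.
    by move=> wd; exact: (no_adj_work I hc hw hd wd he0 hv0).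
  split => /=.
  + move=> v; case: (eqVneq (cand C v) c) => h.
      by rewrite /= hd (negbTE dnc).
    by rewrite Ia (negbTE h).
  + exact: Ib.
  + move=> e he we.
    case: (eqVneq (cand C e) c) => hec.
      by move: he; rewrite hec eqxx => hde; rewrite -hde in we.
    rewrite (negbTE hec) in he.
    have ed : e != d by apply/eqP => hed; rewrite hed in we.
    have enc : e != c by rewrite -he.
    have [Ie He] := Hw e he we. split.
    * move=> u v /and3P[hu a hv]; simpl in hu, hv.
      case: (eqVneq (cand C u) c) => huc.
        by rewrite huc eqxx eq_sym (negbTE ed) in hu.
      rewrite (negbTE huc) in hu.
      case: (eqVneq (cand C v) c) => hvc.
        exfalso; apply: (@no_adj_work C e c u v I he we hc hw _ hvc).
        by rewrite /ext_of hu a hvc eq_sym enc.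
      rewrite (negbTE hvc) in hv.
      have g : id_gt idn C (cand C v) e by apply: (Ie u v); rewrite /ext_of hu a hv.
      by move: g; rewrite /id_gt /= (negbTE hvc).
    * case: He => u [v /and3P[hu a hv]]. exists u, v.
      rewrite /ext_of /= a (eqP hu) (negbTE enc) eqxx /=.
      by case: (eqVneq (cand C v) c) => // _; rewrite eq_sym.
  + move=> l hl wl.
    case: (eqVneq (cand C l) c) => hlc.
      move: hl; rewrite hlc eqxx => hdl; rewrite -hdl in wl.
      have := Hd d hd wl c. rewrite hc => /eqP; by rewrite eq_sym (negbTE dnc).
    rewrite (negbTE hlc) in hl.
    have := Hd l hl wl c. rewrite hc => hcl. by rewrite -hcl hw in wl.
Qed.


Lemma reach_Inv C : reachable adj idn X C -> Inv C.
Proof. elim=> [|C1 C2 _ IH st]; [exact: Inv_init | exact: Inv_step IH st]. Qed.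

Definition Ncard := #|V|.
Definition wt (s : fstate) : nat := if s is FWait then 1%N else 0%N.
Definition term (C : config V) (v : V) : nat :=
  if cand C v == v then (2 * (Ncard.+1 - fsize C v) + wt (fst C v))%N else 0%N.
Definition pot (C : config V) : nat := (\sum_(v : V) term C v)%N.

Lemma sum_lt (F G : V -> nat) c : (forall v, F v <= G v)%N -> (F c < G c)%N ->
  (\sum_(v : V) F v < \sum_(v : V) G v)%N.
Proof.
move=> h hc; rewrite (bigD1 c) //= [X in (_ < X)%N](bigD1 c) //=.
have : (\sum_(i | i != c) F i <= \sum_(i | i != c) G i)%N.
  by apply: leq_sum => i _; exact: h.
lia.
Qed.

Lemma grow_lt C c d : Inv C -> cand C c = c -> fst C c = FWork ->
  max_neighbor adj idn C c d -> X * (fsize C d)%:R < (frag_size C c)%:R ->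
  (fsize C c < frag_size C c)%N.
Proof.
case=> _ _ Hw _ hc wc [[u [v [he hv]]] _] hlt.
have [Ic _] := Hw c hc wc. have := Ic u v he. rewrite hv /id_gt => hg.
have hle : (fsize C c <= fsize C d)%N.
  by case/orP: hg => [/ltnW //| /andP[/eqP -> _]].
rewrite -(ltr_nat R). apply: le_lt_trans hlt.
have h1 : (fsize C c)%:R <= (fsize C d)%:R :> R by rewrite ler_nat.
have h0 : 0 <= (fsize C d)%:R :> R by [].
have h2 : 0 <= (X - 1) * (fsize C d)%:R.
  by apply: mulr_ge0 => //; rewrite subr_ge0 ltW.
lra.
Qed.

Lemma pot_step C C' : Inv C -> step adj idn X C C' -> (pot C' < pot C)%N.
Proof.
move=> I st. have I0 := I. case: I0 => Ia Ib Hw Hd.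
case: st.
- move=> c hc hw hx hi; rewrite /pot; apply: (@sum_lt (term _) (term C) c).
  + move=> v; rewrite /term /= /upd; case: (eqVneq v c) => [->|_] //.
    by rewrite hc ?eqxx hw /=; lia.
  + by rewrite /term /= /upd eqxx hc eqxx hw /=; lia.
- move=> c hc hw hx; rewrite /pot; apply: (@sum_lt (term _) (term C) c).
  + move=> v; rewrite /term /= /upd; case: (eqVneq v c) => [->|_] //.
    by rewrite hc ?eqxx hw /=; lia.
  + by rewrite /term /= /upd eqxx hc eqxx hw /=; lia.
- move=> c d hc hw hm hlt; have gl := grow_lt I hc hw hm hlt.
  have fb : (frag_size C c <= Ncard)%N by exact: max_card.
  rewrite /pot; apply: (@sum_lt (term _) (term C) c).
  + move=> v; rewrite /term /= /upd; case: (eqVneq v c) => [->|_] //.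
    rewrite hc ?eqxx hw /=; lia.
  + rewrite /term /= /upd eqxx hc eqxx hw /=; lia.
- move=> c d hc hw hm hnlt.
  case: (hm) => [[u0 [v0 [he0 hv0]]] _].
  move: (he0); rewrite /ext_of => /and3P[hu0 a0 hv0c].
  have hd : cand C d = d by rewrite -hv0 Ia.
  have dnc : d != c by rewrite -hv0.
  rewrite /pot; apply: (@sum_lt (term _) (term C) c).
  + move=> v; rewrite /term /=.
    case: (eqVneq (cand C v) c) => h.
      case: eqP => // e; rewrite -e hd in h. by rewrite h eqxx in dnc.
    by [].
  + rewrite /term /= hc eqxx (negbTE dnc) hw /=. have : (fsize C c <= Ncard)%N := Ib c. lia.
Qed.

Definition SS := ((\max_(v : V) idn v)%N).+1.
Lemma idn_lt v : (idn v < SS)%N.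
Proof. rewrite ltnS. exact: leq_bigmax. Qed.
Definition key (C : config V) v := (fsize C v * SS + idn v)%N.

Lemma key_gt C a b : (key C a < key C b)%N -> id_gt idn C b a.
Proof.
rewrite /key /id_gt; have := idn_lt a; have := idn_lt b => ha hb.
case: (ltngtP (fsize C a) (fsize C b)) => h /=.
- by [].
- have := leq_mul h (leqnn SS). lia.
- rewrite ?h ?eqxx /= => k; lia.
Qed.

Lemma key_inj C a b : key C a = key C b -> a = b.
Proof.
rewrite /key; have := idn_lt a; have := idn_lt b => ha hb.
case: (ltngtP (fsize C a) (fsize C b)) => h.
- have := leq_mul h (leqnn SS). lia.
- have := leq_mul h (leqnn SS). lia.
- rewrite h => e. apply: idn_inj. lia.
Qed.


Lemma terminal_leader C : Inv C -> terminal adj idn X C ->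
  exists l, cand C l = l /\ fst C l = FLeader.
Proof.
move=> I T. have I0 := I. case: I0 => Ia _ Hw _.
have /card_gt0P[v0 _] := V_ne.
have P0 : (fun i => cand C i == i) (cand C v0) by rewrite /= Ia.
case: (@arg_minnP _ (cand C v0) (fun i => cand C i == i) (key C) P0) => m /eqP hm mmin.
have Im : all_incoming adj idn C m.
  move=> u v /and3P[/eqP hu a hv]. apply: key_gt.
  have hc : cand C (cand C v) == cand C v by rewrite Ia.
  have := mmin _ hc. rewrite leq_eqVlt => /orP[/eqP e|//].
  by move/key_inj: e => e; rewrite -e eqxx in hv.
case hs: (fst C m).
- exfalso. case: (classic (has_ext adj C m)) => hx.
    exact: (T _ (StartWork X hm hs hx Im)).
  exact: (T _ (BecomeLeader idn X hm hs hx)).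
- exfalso. have [_ [u [v hx]]] := Hw m hm hs.
  pose P := fun e => [exists u, exists v, ext_of adj C m u v && (cand C v == e)].
  have Pv : P (cand C v) by apply/existsP; exists u; apply/existsP; exists v; rewrite hx eqxx.
  case: (@arg_maxnP _ (cand C v) P (key C) Pv) => d Pd dmax.
  have nf : forall e, P e -> neighbor_frag adj C m e.
    move=> e /existsP[u1 /existsP[v1 /andP[h1 /eqP h2]]]. by exists u1, v1.
  have hmax : max_neighbor adj idn C m d.
    split; first exact: nf.
    move=> e [u1 [v1 [h1 h2]]].
    have Pe : P e by apply/existsP; exists u1; apply/existsP; exists v1; rewrite h1 h2 eqxx.
    have : (key C e <= key C d)%N := dmax _ Pe.
    rewrite leq_eqVlt => /orP[/eqP e1|lt].
      by left; exact: key_inj e1.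
    by right; exact: key_gt lt.
  case: (boolP (X * (fsize C d)%:R < (frag_size C m)%:R)) => hl.
    exact: (T _ (FinishGrow hm hs hmax hl)).
  exact: (T _ (FinishJoin hm hs hmax (negP hl))).
- by exists m.
Qed.

End Proof.

Theorem theorem2 (V : finType) (adj : rel V) (idn : V -> nat)
    (R : realFieldType) (X : R) :
  symmetric adj -> irreflexive adj -> (forall x y : V, connect adj x y) ->
  injective idn -> 1 < X -> (0 < #|V|)%N ->
  (* termination: there is no infinite execution *)
  (~ exists f : nat -> config V,
       f 0%N = init V /\ forall k, step adj idn X (f k) (f k.+1)) /\
  (* every execution that cannot be extended ends with exactly one leader *)
  (forall C, reachable adj idn X C -> terminal adj idn X C ->
     exists! l : V, cand C l = l /\ fst C l = FLeader).
Proof.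
move=> hsym _ hconn hinj hX hV; split.
- case=> f [f0 fs].
  have hr : forall k, reachable adj idn X (f k).
    elim=> [|k IH]; first by rewrite f0; exact: reach0.
    exact: reachS IH (fs k).
  have hdec : forall k, (pot (f k.+1) < pot (f k))%N.
    move=> k; apply: (pot_step hX hV _ (fs k)). exact: (reach_Inv hsym hconn hX hV (hr k)).
  have hb : forall k, (pot (f k) + k <= pot (f 0%N))%N.
    elim=> [|k IH]; first by rewrite addn0.
    have := hdec k. lia.
  have := hb (pot (f 0%N)).+1. lia.
- move=> C hr ht. have I := reach_Inv hsym hconn hX hV hr.
  have [l hl] := terminal_leader hinj hX hV I ht.
  exists l; split => // l' [hl' wl'].
  case: I => _ _ _ Hd. by rewrite -(Hd l' hl' wl' l) (proj1 hl).
Qed.
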